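(* Let $X$ be a set, $B\subseteq\mathbb{R}^X$ an $\mathbb{R}$-subalgebra and $Q\subseteq B$ a quadratic module with $K_{Q,X}=X$ and $m(X)=K_{Q,Y_B}$. Let $f\in\mathbb{R}^X$ and $A=B[f]\subseteq\mathbb{R}^X$. In each of the following cases, the restriction map $p\colon K_{Q',Y_A}\to K_{Q,Y_B}$ is injective, $K_{Q',X}=X$, and $m(X)=K_{Q',Y_A}$: (1) $f=\sqrt[r]{g}$ (pointwise real $r$-th root) with $r$ odd and $g\in B$, and $Q'$ is the quadratic module of $A$ generated by $Q$; (2) $f=\sqrt[s]{g}$ (pointwise nonnegative $s$-th root) with $s$ even, $g\in B$, $g\ge0$ on $X$, and $Q'$ is the quadratic module of $A$ generated by $Q$ and $f$; (3) $f=\frac1g$ with $g\in B$, $g(x)\ne0$ for all $x\in X$, and $Q'$ is the quadratic module of $A$ generated by $Q$; (4) $f=g\cdot\chi_{\{q\ge0\}}+h\cdot\chi_{\{q<0\}}$ for some $g,h,q\in B$ such that for $x\in X$, $q(x)=0$ implies $g(x)=h(x)$, and $Q'$ is the quadratic module of $A$ generated by $Q$ and $-q(f-g)^2$, $q(f-h)^2$.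
   Context: A quadratic module of a commutative unital $\mathbb{R}$-algebra $C$ is a subset $Q\subseteq C$ with $Q+Q\subseteq Q$, $c^2Q\subseteq Q$ for all $c\in C$, and $1\in Q$. For an $\mathbb{R}$-subalgebra $C\subseteq\mathbb{R}^X$ and a quadratic module $Q$ of $C$: $K_{Q,X}:=\{x\in X\mid g(x)\ge0\ \forall g\in Q\}$; $Y_C$ is the set of unital $\mathbb{R}$-algebra homomorphisms $C\to\mathbb{R}$, with the weakest topology making all maps $y\mapsto y(c)$ continuous; $K_{Q,Y_C}:=\{y\in Y_C\mid y(g)\ge0\ \forall g\in Q\}$; $m\colon X\to Y_C$, $m(x)(c)=c(x)$. The map $p\colon Y_A\to Y_B$ is restriction $y\mapsto y|_B$; it maps $K_{Q',Y_A}$ into $K_{Q,Y_B}$ whenever $Q'\cap B\supseteq Q$. $\chi_S$ denotes the characteristic function of $S\subseteq X$, and $\{q\ge0\}=\{x\in X\mid q(x)\ge0\}$, etc. *)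

(* Defs.v *)
From Stdlib Require Import Reals.
Open Scope R_scope.

Definition is_subalg {X : Type} (C : (X -> R) -> Prop) : Prop :=
  C (fun _ => 1) /\
  (forall f g, C f -> C g -> C (fun x => f x + g x)) /\
  (forall f g, C f -> C g -> C (fun x => f x * g x)) /\
  (forall (a : R) f, C f -> C (fun x => a * f x)).

Definition is_qmodule {X : Type} (C Q : (X -> R) -> Prop) : Prop :=
  (forall g, Q g -> C g) /\
  (forall g h, Q g -> Q h -> Q (fun x => g x + h x)) /\
  (forall c g, C c -> Q g -> Q (fun x => (c x) ^ 2 * g x)) /\
  Q (fun _ => 1).

Definition qm_gen {X : Type} (C S : (X -> R) -> Prop) : (X -> R) -> Prop :=
  fun g => forall Q, is_qmodule C Q -> (forall s, S s -> Q s) -> Q g.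

Definition alg_adj {X : Type} (B : (X -> R) -> Prop) (f : X -> R) : (X -> R) -> Prop :=
  fun a => forall C, is_subalg C -> (forall b, B b -> C b) -> C f -> C a.

Definition K_X {X : Type} (Q : (X -> R) -> Prop) (x : X) : Prop :=
  forall g, Q g -> 0 <= g x.

(* A point of Y_C is represented by any y : R^X -> R whose restriction to C
   is such a homomorphism; two representatives denote the same point of Y_C
   iff they agree on C. *)
Definition is_char {X : Type} (C : (X -> R) -> Prop) (y : (X -> R) -> R) : Prop :=
  y (fun _ => 1) = 1 /\
  (forall f g, C f -> C g -> y (fun x => f x + g x) = y f + y g) /\
  (forall f g, C f -> C g -> y (fun x => f x * g x) = y f * y g) /\
  (forall (a : R) f, C f -> y (fun x => a * f x) = a * y f).

Definition K_Y {X : Type} (C Q : (X -> R) -> Prop) (y : (X -> R) -> R) : Prop :=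
  is_char C y /\ forall g, Q g -> 0 <= y g.

Definition m_pt {X : Type} (x : X) : (X -> R) -> R := fun c => c x.

Definition m_image_eq {X : Type} (C Q : (X -> R) -> Prop) : Prop :=
  (forall x, K_Y C Q (m_pt x)) /\
  (forall y, K_Y C Q y -> exists x, forall c, C c -> y c = m_pt x c).

Definition restr_injective {X : Type} (B A Q' : (X -> R) -> Prop) : Prop :=
  forall y1 y2, K_Y A Q' y1 -> K_Y A Q' y2 ->
    (forall b, B b -> y1 b = y2 b) -> forall a, A a -> y1 a = y2 a.

Definition prop_concl {X : Type} (B A Q' : (X -> R) -> Prop) : Prop :=
  restr_injective B A Q' /\ (forall x, K_X Q' x) /\ m_image_eq A Q'.

Definition chi_ge0 {X : Type} (q : X -> R) : X -> R :=
  fun x => if Rle_dec 0 (q x) then 1 else 0.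
Definition chi_lt0 {X : Type} (q : X -> R) : X -> R :=
  fun x => if Rlt_dec (q x) 0 then 1 else 0.

(* Main.v *)
Require Import Defs.
From Stdlib Require Import Reals Arith.
From Stdlib Require Import Lra Lia FunctionalExtensionality.
Open Scope R_scope.

Lemma pow_lt_nn (a b : R) (n : nat) : 0 <= a -> a < b -> a ^ (S n) < b ^ (S n).
Proof.
  intros Ha Hab. induction n as [|n IH].
  - simpl. lra.
  - change (a * a ^ (S n) < b * b ^ (S n)).
    assert (0 <= a ^ S n) by (apply pow_le; lra).
    nra.
Qed.

Lemma pow_inj_nn (a b : R) (n : nat) : (0 < n)%nat -> 0 <= a -> 0 <= b ->
  a ^ n = b ^ n -> a = b.
Proof.
  intros Hn Ha Hb E. destruct n as [|n]; [lia|].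
  destruct (Rtotal_order a b) as [H|[H|H]]; auto.
  - pose proof (pow_lt_nn a b n Ha H). lra.
  - pose proof (pow_lt_nn b a n Hb H). lra.
Qed.

Lemma pow_odd_opp (a : R) (k : nat) : (- a) ^ (2 * k + 1) = - (a ^ (2 * k + 1)).
Proof.
  replace (- a) with ((-1) * a) by ring. rewrite Rpow_mult_distr.
  rewrite pow_add, pow_1_even. simpl. ring.
Qed.

Lemma pow_odd_lt (a b : R) (k : nat) : a < b -> a ^ (2 * k + 1) < b ^ (2 * k + 1).
Proof.
  intros H. replace (2 * k + 1)%nat with (S (2 * k)) by lia.
  destruct (Rle_dec 0 a).
  - apply pow_lt_nn; lra.
  - destruct (Rle_dec b 0).
    + pose proof (pow_lt_nn (- b) (- a) (2 * k) ltac:(lra) ltac:(lra)) as P.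
      replace (S (2 * k)) with (2 * k + 1)%nat in * by lia.
      rewrite !pow_odd_opp in P. lra.
    + assert (P1 : b ^ S (2 * k) > 0) by (apply pow_lt; lra).
      assert (P2 : (- a) ^ S (2 * k) > 0) by (apply pow_lt; lra).
      replace (S (2 * k)) with (2 * k + 1)%nat in * by lia.
      rewrite !pow_odd_opp in P2. lra.
Qed.

Lemma pow_odd_inj (a b : R) (r : nat) : Nat.Odd r -> a ^ r = b ^ r -> a = b.
Proof.
  intros [k ->] E.
  destruct (Rtotal_order a b) as [H|[H|H]]; auto.
  - pose proof (pow_odd_lt a b k H). lra.
  - pose proof (pow_odd_lt b a k H). lra.
Qed.


Section Gen.
Context {X : Type}.

Lemma adj_subalg (B : (X -> R) -> Prop) f : is_subalg (alg_adj B f).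
Proof.
  unfold is_subalg, alg_adj. repeat split.
  - intros C HC HBC Hf. apply HC.
  - intros u v Hu Hv C HC HBC Hf. apply HC; [apply (Hu C) | apply (Hv C)]; auto.
  - intros u v Hu Hv C HC HBC Hf. apply HC; [apply (Hu C) | apply (Hv C)]; auto.
  - intros a u Hu C HC HBC Hf. apply HC; apply (Hu C); auto.
Qed.

Lemma adj_B (B : (X -> R) -> Prop) f b : B b -> alg_adj B f b.
Proof. intros Hb C _ HBC _. auto. Qed.

Lemma adj_f (B : (X -> R) -> Prop) f : alg_adj B f f.
Proof. intros C _ _ Hf. auto. Qed.

Lemma gen_incl (C S : (X -> R) -> Prop) s : S s -> qm_gen C S s.
Proof. intros Hs Q _ HS. auto. Qed.

Lemma sub_sq (C : (X -> R) -> Prop) c g : is_subalg C -> C c -> C g ->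
  C (fun x => c x ^ 2 * g x).
Proof.
  intros (H1&Ha&Hm&Hs) Hc Hg.
  replace (fun x => c x ^ 2 * g x) with (fun x => (fun x => c x * c x) x * g x)
    by (apply functional_extensionality; intro; simpl; ring).
  apply (Hm (fun x => c x * c x) g); auto.
Qed.

Theorem generic (B Q : (X -> R) -> Prop) (f : X -> R) (S : (X -> R) -> Prop)
  (HB : is_subalg B) (HQ : is_qmodule B Q)
  (HKX : forall x, K_X Q x) (Hm : m_image_eq B Q)
  (HSA : forall s, S s -> alg_adj B f s)
  (HQS : forall k, Q k -> S k)
  (HSpos : forall s, S s -> forall x, 0 <= s x)
  (Hkey : forall y x, K_Y (alg_adj B f) (qm_gen (alg_adj B f) S) y ->
      (forall b, B b -> y b = b x) -> y f = f x)
  (Hsep : forall x1 x2, (forall b, B b -> b x1 = b x2) -> f x1 = f x2) :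
  prop_concl B (alg_adj B f) (qm_gen (alg_adj B f) S).
Proof.
  set (A := alg_adj B f) in *.
  assert (HA : is_subalg A) by apply adj_subalg.
  assert (HBA : forall b, B b -> A b) by (intros; apply adj_B; auto).
  assert (HfA : A f) by apply adj_f.
  assert (HK : forall x, K_X (qm_gen A S) x).
  { intros x g Hg.
    set (Q2 := fun k => A k /\ forall x, 0 <= k x).
    assert (HQ2 : is_qmodule A Q2).
    { unfold Q2. destruct HA as (H1&Ha&Hmu&Hs). split; [|split; [|split]].
      - intros kk [H _]; auto.
      - intros kk hh [A1 P1] [A2 P2]. split; [apply Ha; auto|]. intro; specialize (P1 x0); specialize (P2 x0); lra.
      - intros c kk Hc [A1 P1]. split; [apply sub_sq; auto; repeat split; auto|].
        intro. specialize (P1 x0). apply Rmult_le_pos; auto. apply pow2_ge_0.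
      - split; [exact H1|intro; lra]. }
    assert (Q2 g) as [_ P].
    { apply Hg; auto. intros s Hs. split; auto. }
    unfold Q2 in *.
    apply P. }
  assert (Hm2 : forall y, K_Y A (qm_gen A S) y -> exists x, forall c, A c -> y c = m_pt x c).
  { intros y Hy. destruct Hy as [Hc Hpos] eqn:Ey.
    destruct Hm as [_ Hm2].
    assert (HyB : K_Y B Q y).
    { destruct Hc as (c1&c2&c3&c4). split; [repeat split; auto|].
      intros g Hg. apply Hpos. apply gen_incl. auto. }
    destruct (Hm2 y HyB) as [x Hx]. exists x.
    assert (Hyf : y f = f x) by (apply Hkey; auto).
    set (C := fun a => A a /\ y a = a x).
    assert (HC : is_subalg C).
    { destruct HA as (H1&Ha&Hmu&Hs). destruct Hc as (c1&c2&c3&c4).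
      unfold C; split; [|split; [|split]].
      - split; auto.
      - intros u v [Au Eu] [Av Ev]. split; [apply Ha; auto|]. rewrite c2; auto. rewrite Eu, Ev; auto.
      - intros u v [Au Eu] [Av Ev]. split; [apply Hmu; auto|]. rewrite c3; auto. rewrite Eu, Ev; auto.
      - intros a u [Au Eu]. split; [apply Hs; auto|]. rewrite c4; auto. rewrite Eu; auto. }
    intros c Hc'. apply (Hc' C HC).
    - intros b Hb. split; auto.
    - split; auto. }
  split; [|split; [exact HK|split; [|exact Hm2]]].
  - intros y1 y2 Hy1 Hy2 Hagree a Ha.
    destruct (Hm2 y1 Hy1) as [x1 H1]. destruct (Hm2 y2 Hy2) as [x2 H2].
    rewrite (H1 a Ha), (H2 a Ha). unfold m_pt.
    assert (Hb : forall b, B b -> b x1 = b x2).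
    { intros b Hb. change (m_pt x1 b = m_pt x2 b). rewrite <- (H1 b (HBA b Hb)), <- (H2 b (HBA b Hb)). auto. }
    set (C := fun (k : X -> R) => k x1 = k x2).
    assert (HC : is_subalg C).
    { unfold C; repeat split; intros; congruence. }
    apply (Ha C HC); auto. apply Hsep; auto.
  - intros x. split.
    + unfold m_pt; repeat split; auto.
    + intros g Hg. apply HK; auto.
Qed.
End Gen.


Section C.
Context {X : Type}.

Lemma y_pow (A : (X -> R) -> Prop) y u n : is_subalg A -> is_char A y -> A u ->
  A (fun x => u x ^ n) /\ y (fun x => u x ^ n) = y u ^ n.
Proof.
  intros HA Hc Hu. pose proof HA as (H1&Ha&Hm&Hs). pose proof Hc as (c1&c2&c3&c4).
  induction n as [|n [IHA IHy]].
  - simpl. auto.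
  - change (A (fun x => u x * (fun x => u x ^ n) x) /\
            y (fun x => u x * (fun x => u x ^ n) x) = y u * y u ^ n).
    split; [apply Hm; auto|]. rewrite c3; auto. rewrite IHy; auto.
Qed.

Lemma case1 (B Q : (X -> R) -> Prop)
  (HB : is_subalg B) (HQ : is_qmodule B Q)
  (HKX : forall x, K_X Q x) (Hm : m_image_eq B Q) (r : nat) (g f : X -> R) :
     Nat.Odd r -> B g -> (forall x, f x ^ r = g x) ->
     prop_concl B (alg_adj B f) (qm_gen (alg_adj B f) Q).
Proof.
  intros Hr Hg Hf.
  assert (Eg : g = fun x => f x ^ r) by (apply functional_extensionality; intro; auto).
  apply (generic B Q); auto.
  - intros s Hs. apply adj_B. apply HQ; auto.
  - intros s Hs x. apply HKX; auto.
  - intros y x [Hc _] Hy.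
    destruct (y_pow (alg_adj B f) y f r (adj_subalg B f) Hc (adj_f B f)) as [_ E].
    rewrite <- Eg, Hy in E; auto. apply (pow_odd_inj _ _ r Hr). rewrite <- E. auto.
  - intros x1 x2 H. apply (pow_odd_inj _ _ r Hr). rewrite !Hf. auto.
Qed.

Lemma case2 (B Q : (X -> R) -> Prop)
  (HB : is_subalg B) (HQ : is_qmodule B Q)
  (HKX : forall x, K_X Q x) (Hm : m_image_eq B Q) (s : nat) (g f : X -> R) :
     Nat.Even s -> (0 < s)%nat -> B g -> (forall x, 0 <= g x) ->
     (forall x, 0 <= f x /\ f x ^ s = g x) ->
     prop_concl B (alg_adj B f)
       (qm_gen (alg_adj B f) (fun k => Q k \/ k = f)).
Proof.
  intros _ Hs Hg Hg0 Hf.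
  assert (Eg : g = fun x => f x ^ s) by (apply functional_extensionality; intro z; symmetry; apply Hf).
  apply (generic B Q); auto.
  - intros k [Hk| ->]. + apply adj_B. apply HQ; auto. + apply adj_f.
  - intros k [Hk| ->] x. + apply HKX; auto. + apply Hf.
  - intros y x [Hc Hpos] Hy.
    destruct (y_pow (alg_adj B f) y f s (adj_subalg B f) Hc (adj_f B f)) as [_ E].
    rewrite <- Eg, Hy in E; auto. apply (pow_inj_nn _ _ s Hs).
    + apply Hpos. apply gen_incl. auto.
    + apply Hf.
    + rewrite <- E. symmetry; apply Hf.
  - intros x1 x2 H. apply (pow_inj_nn _ _ s Hs); try apply Hf.
    rewrite (proj2 (Hf x1)), (proj2 (Hf x2)). auto.
Qed.

Lemma case3 (B Q : (X -> R) -> Prop)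
  (HB : is_subalg B) (HQ : is_qmodule B Q)
  (HKX : forall x, K_X Q x) (Hm : m_image_eq B Q) (g f : X -> R) :
     B g -> (forall x, g x <> 0) -> (forall x, f x = / g x) ->
     prop_concl B (alg_adj B f) (qm_gen (alg_adj B f) Q).
Proof.
  intros Hg Hg0 Hf.
  apply (generic B Q); auto.
  - intros s Hs. apply adj_B. apply HQ; auto.
  - intros s Hs x. apply HKX; auto.
  - intros y x [Hc _] Hy. pose proof Hc as (c1&c2&c3&c4).
    assert (E : (fun x => f x * g x) = (fun _ => 1)).
    { apply functional_extensionality; intro z. rewrite Hf. field. auto. }
    assert (E2 : y f * y g = 1).
    { rewrite <- (c3 f g), E; auto. apply adj_f. apply adj_B; auto. }
    rewrite (Hy g Hg) in E2. rewrite Hf. specialize (Hg0 x).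
    apply (Rmult_eq_reg_r (g x)); auto. rewrite E2. field; auto.
  - intros x1 x2 H. rewrite !Hf, H; auto.
Qed.
End C.


Section C.
Context {X : Type}.

Lemma case4 (B Q : (X -> R) -> Prop)
  (HB : is_subalg B) (HQ : is_qmodule B Q)
  (HKX : forall x, K_X Q x) (Hm : m_image_eq B Q) (g h q f : X -> R) :
     B g -> B h -> B q -> (forall x, q x = 0 -> g x = h x) ->
     (forall x, f x = g x * chi_ge0 q x + h x * chi_lt0 q x) ->
     prop_concl B (alg_adj B f)
       (qm_gen (alg_adj B f)
          (fun k => Q k
             \/ k = (fun x => - q x * (f x - g x) ^ 2)
             \/ k = (fun x => q x * (f x - h x) ^ 2))).
Proof.
  intros Hg Hh Hq Hgh Hf.
  assert (HA : is_subalg (alg_adj B f)) by apply adj_subalg.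
  assert (HBA : forall b, B b -> alg_adj B f b) by (intros; apply adj_B; auto).
  assert (HfA : alg_adj B f f) by apply adj_f.
  pose proof HA as (H1&Ha&Hmu&Hs).
  assert (Hfx : forall x, (0 <= q x /\ f x = g x) \/ (q x < 0 /\ f x = h x)).
  { intro x. rewrite Hf. unfold chi_ge0, chi_lt0.
    destruct (Rle_dec 0 (q x)); destruct (Rlt_dec (q x) 0); try lra. }
  assert (HE1 : alg_adj B f (fun x => - q x * (f x - g x) ^ 2)).
  { replace (fun x => - q x * (f x - g x) ^ 2) with
      (fun x => -1 * (fun x => q x * (fun x => (fun x => f x + (fun x => -1 * g x) x) x *
           (fun x => f x + (fun x => -1 * g x) x) x) x) x)
      by (apply functional_extensionality; intro; simpl; ring).
    apply Hs, Hmu, Hmu; auto; apply Ha; auto; apply Hs; auto. }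
  assert (HE2 : alg_adj B f (fun x => q x * (f x - h x) ^ 2)).
  { replace (fun x => q x * (f x - h x) ^ 2) with
      (fun x => q x * (fun x => (fun x => f x + (fun x => -1 * h x) x) x *
           (fun x => f x + (fun x => -1 * h x) x) x) x)
      by (apply functional_extensionality; intro; simpl; ring).
    apply Hmu, Hmu; auto; apply Ha; auto; apply Hs; auto. }
  apply (generic B Q); auto.
  - intros s [Hs'|[->| ->]]; auto. apply adj_B. apply HQ; auto.
  - intros s [Hs'|[->| ->]] x; [apply HKX; auto| |];
      destruct (Hfx x) as [[P E]|[P E]]; rewrite E.
    + replace (g x - g x) with 0 by ring. simpl. lra.
    + assert (0 <= (h x - g x)^2) by apply pow2_ge_0. nra.
    + assert (0 <= (g x - h x)^2) by apply pow2_ge_0. nra.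
    + replace (h x - h x) with 0 by ring. simpl. lra.
  - intros y x [Hc Hpos] Hy. pose proof Hc as (c1&c2&c3&c4).
    set (t := y f).
    assert (D : forall u, B u -> alg_adj B f (fun z => f z + (fun z => -1 * u z) z) /\
        y (fun z => f z + (fun z => -1 * u z) z) = t - u x).
    { intros u Hu. split.
      - apply Ha; auto; apply Hs; auto.
      - rewrite (c2 f (fun z => -1 * u z)); auto. rewrite (c4 (-1) u); auto.
        rewrite (Hy u Hu). unfold t. ring. all: first [solve [apply HBA; auto] | apply Hs; apply HBA; auto]. }
    destruct (D g Hg) as [DgA Dgy]. destruct (D h Hh) as [DhA Dhy].
    set (Dg := fun z => f z + (fun z => -1 * g z) z) in *.
    set (Dh := fun z => f z + (fun z => -1 * h z) z) in *.
    assert (R0 : (t - g x) * (t - h x) = 0).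
    { assert (E : (fun z => Dg z * Dh z) = (fun z => 0 * (fun _ => 1) z)).
      { apply functional_extensionality; intro z. unfold Dg, Dh.
        destruct (Hfx z) as [[P E]|[P E]]; rewrite E; ring. }
      rewrite <- Dgy, <- Dhy, <- (c3 Dg Dh); auto. rewrite E, c4; auto. ring. }
    assert (R1 : 0 <= -1 * (q x * ((t - g x) * (t - g x)))).
    { rewrite <- (Hy q Hq), <- Dgy, <- (c3 Dg Dg), <- (c3 q), <- c4; auto.
      apply Hpos. apply gen_incl. right; left.
      apply functional_extensionality; intro; unfold Dg; simpl; ring. }
    assert (R2 : 0 <= q x * ((t - h x) * (t - h x))).
    { rewrite <- (Hy q Hq), <- Dhy, <- (c3 Dh Dh), <- (c3 q); auto.
      apply Hpos. apply gen_incl. right; right.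
      apply functional_extensionality; intro; unfold Dh; simpl; ring. }
    destruct (Hfx x) as [[P E]|[P E]]; rewrite E.
    + destruct (Rle_lt_or_eq_dec 0 (q x) P) as [P'|P'].
      * assert (S0 : 0 <= (t - g x) * (t - g x)) by apply Rle_0_sqr.
        assert (S1 : (t - g x) * (t - g x) = 0).
        { apply Rle_antisym; auto.
          apply (Rmult_le_reg_l (q x)); auto. lra. }
        apply Rmult_integral in S1. destruct S1; lra.
      * rewrite <- (Hgh x (eq_sym P')) in R0.
        apply Rmult_integral in R0. destruct R0; lra.
    + assert (S0 : 0 <= (t - h x) * (t - h x)) by apply Rle_0_sqr.
      assert (S1 : (t - h x) * (t - h x) = 0).
      { apply Rle_antisym; auto.
        apply (Rmult_le_reg_l (- q x)); [lra|]. lra. }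
      apply Rmult_integral in S1. destruct S1; lra.
  - intros x1 x2 H. rewrite !Hf. unfold chi_ge0, chi_lt0.
    rewrite (H g Hg), (H h Hh), (H q Hq). auto.
Qed.
End C.

Theorem proposition3p1 (X : Type) (B Q : (X -> R) -> Prop)
  (HB : is_subalg B) (HQ : is_qmodule B Q)
  (HKX : forall x, K_X Q x) (Hm : m_image_eq B Q) :
  (* (1) f = real r-th root of g, r odd *)
  (forall (r : nat) (g f : X -> R),
     Nat.Odd r -> B g -> (forall x, f x ^ r = g x) ->
     prop_concl B (alg_adj B f) (qm_gen (alg_adj B f) Q)) /\
  (* (2) f = nonnegative s-th root of g >= 0, s even *)
  (forall (s : nat) (g f : X -> R),
     Nat.Even s -> (0 < s)%nat -> B g -> (forall x, 0 <= g x) ->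
     (forall x, 0 <= f x /\ f x ^ s = g x) ->
     prop_concl B (alg_adj B f)
       (qm_gen (alg_adj B f) (fun k => Q k \/ k = f))) /\
  (* (3) f = 1/g, g nowhere zero *)
  (forall (g f : X -> R),
     B g -> (forall x, g x <> 0) -> (forall x, f x = / g x) ->
     prop_concl B (alg_adj B f) (qm_gen (alg_adj B f) Q)) /\
  (* (4) f = g chi_{q>=0} + h chi_{q<0} *)
  (forall (g h q f : X -> R),
     B g -> B h -> B q -> (forall x, q x = 0 -> g x = h x) ->
     (forall x, f x = g x * chi_ge0 q x + h x * chi_lt0 q x) ->
     prop_concl B (alg_adj B f)
       (qm_gen (alg_adj B f)
          (fun k => Q k
             \/ k = (fun x => - q x * (f x - g x) ^ 2)
             \/ k = (fun x => q x * (f x - h x) ^ 2)))).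
Proof.
  split; [|split; [|split]].
  - intros; eapply case1; eauto.
  - intros; eapply case2; eauto.
  - intros; eapply case3; eauto.
  - intros; eapply case4; eauto.
Qed.
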